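(* Let $\mathbf{L}$ be a Euclidean modal logic. If $\{2\}\times\mathbf{N}^{-}\subseteq\mathtt{S}_{\mathbf{L}}$, then $\mathtt{Th}(\mathtt{Fr}(\mathbf{L}))$ is undecidable.
   Context: A frame is a pair $(W,R)$ with $W$ non-empty and $R\subseteq W\times W$. Modal formulas (propositional variables, $\bot,\neg,\vee,\Box$) have standard Kripke semantics; validity in a frame means truth at all points under all valuations. A (normal) modal logic contains all tautologies and K axioms and is closed under uniform substitution, modus ponens and necessitation; a Euclidean modal logic is one not containing $\bot$ and containing $\Diamond\psi\to\Box\Diamond\psi$ for all $\psi$. $\mathtt{Fr}(\mathbf{L})$ is the class of frames validating $\mathbf{L}$; $\mathtt{Th}(\mathcal{C})$ is the set of first-order sentences (one binary relation symbol $\mathbf{R}$ and equality) valid in all frames of $\mathcal{C}$. $\mathbf{N}^{+}=\{1,2,\dots\}$, $\mathbf{N}^{-}=\{-1,0,1,\dots\}$. For $m\in\mathbf{N}^{+}$, $n\ge0$, the flower $\mathcal{F}_m^n$ has universe $\{0,\dots,m+n\}$ and relation $(\{0\}\times\{1,\dots,m\})\cup\{1,\dots,m+n\}^2$; $\mathcal{F}_m^{-1}$ has universe $\{1,\dots,m\}$ and relation $\{1,\dots,m\}^2$. $\mathtt{S}_{\mathbf{L}}=\{(m,n)\in\mathbf{N}^{+}\times\mathbf{N}^{-}:\ \mathbf{L}\text{ valid in }\mathcal{F}_m^n\}$. *)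

(* Defs.v *)
From Stdlib Require Import Arith ZArith List.
Import ListNotations.

Inductive mform : Type :=
| mVar : nat -> mform
| mBot : mform
| mNeg : mform -> mform
| mOr  : mform -> mform -> mform
| mBox : mform -> mform.

Definition mImp (a b : mform) : mform := mOr (mNeg a) b.
Definition mDia (a : mform) : mform := mNeg (mBox (mNeg a)).

Fixpoint msat {W : Type} (R : W -> W -> Prop) (V : nat -> W -> Prop)
  (w : W) (f : mform) : Prop :=
  match f with
  | mVar p => V p w
  | mBot => False
  | mNeg a => ~ msat R V w a
  | mOr a b => msat R V w a \/ msat R V w b
  | mBox a => forall v, R w v -> msat R V v a
  end.

Definition frame_valid {W : Type} (R : W -> W -> Prop) (f : mform) : Prop :=
  forall (V : nat -> W -> Prop) (w : W), msat R V w f.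

Definition validates {W : Type} (R : W -> W -> Prop) (L : mform -> Prop) : Prop :=
  forall f, L f -> frame_valid R f.

Fixpoint msubst (s : nat -> mform) (f : mform) : mform :=
  match f with
  | mVar p => s p
  | mBot => mBot
  | mNeg a => mNeg (msubst s a)
  | mOr a b => mOr (msubst s a) (msubst s b)
  | mBox a => mBox (msubst s a)
  end.

Fixpoint beval (v : mform -> bool) (f : mform) : bool :=
  match f with
  | mVar p => v (mVar p)
  | mBot => false
  | mNeg a => negb (beval v a)
  | mOr a b => orb (beval v a) (beval v b)
  | mBox a => v (mBox a)
  end.

(* instances of propositional tautologies *)
Definition tautology (f : mform) : Prop := forall v, beval v f = true.

Definition normal_modal_logic (L : mform -> Prop) : Prop :=
  (forall f, tautology f -> L f) /\
  (forall a b, L (mImp (mBox (mImp a b)) (mImp (mBox a) (mBox b)))) /\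
  (forall s f, L f -> L (msubst s f)) /\
  (forall a b, L (mImp a b) -> L a -> L b) /\
  (forall a, L a -> L (mBox a)).

Definition euclidean_modal_logic (L : mform -> Prop) : Prop :=
  normal_modal_logic L /\ ~ L mBot /\
  (forall a, L (mImp (mDia a) (mBox (mDia a)))).

(* universe {0..m+n} for n >= 0, {1..m} for n = -1 *)
Definition flower_W (m : nat) (n : Z) : Type :=
  { x : nat | ((n = (-1)%Z) -> 1 <= x) /\ x <= m + Z.to_nat n }.

Definition flower_R (m : nat) (n : Z) (x y : flower_W m n) : Prop :=
  let a := proj1_sig x in let b := proj1_sig y in
  (a = 0 /\ 1 <= b <= m) \/
  (1 <= a <= m + Z.to_nat n /\ 1 <= b <= m + Z.to_nat n).

Definition S_L (L : mform -> Prop) (m : nat) (n : Z) : Prop :=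
  1 <= m /\ (-1 <= n)%Z /\ validates (flower_R m n) L.

Inductive fform : Type :=
| fEq  : nat -> nat -> fform
| fRel : nat -> nat -> fform
| fBot : fform
| fImp : fform -> fform -> fform
| fAll : nat -> fform -> fform.

Definition upd {W : Type} (e : nat -> W) (i : nat) (x : W) : nat -> W :=
  fun j => if Nat.eqb j i then x else e j.

Fixpoint fsat {W : Type} (R : W -> W -> Prop) (e : nat -> W) (f : fform) : Prop :=
  match f with
  | fEq i j => e i = e j
  | fRel i j => R (e i) (e j)
  | fBot => False
  | fImp a b => fsat R e a -> fsat R e b
  | fAll i a => forall x : W, fsat R (upd e i x) a
  end.

Fixpoint free_in (i : nat) (f : fform) : bool :=
  match f with
  | fEq a b => Nat.eqb i a || Nat.eqb i b
  | fRel a b => Nat.eqb i a || Nat.eqb i b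
  | fBot => false
  | fImp a b => free_in i a || free_in i b
  | fAll j a => negb (Nat.eqb i j) && free_in i a
  end.

Definition sentence (f : fform) : Prop := forall i, free_in i f = false.

Definition Th_Fr (L : mform -> Prop) (f : fform) : Prop :=
  sentence f /\
  forall (W : Type) (R : W -> W -> Prop), inhabited W -> validates R L ->
    forall e : nat -> W, fsat R e f.

Inductive prf : Type :=
| pZero : prf
| pSucc : prf
| pProj : nat -> prf
| pComp : prf -> list prf -> prf
| pRec  : prf -> prf -> prf
| pMu   : prf -> prf.

Inductive peval : prf -> list nat -> nat -> Prop :=
| evZero v : peval pZero v 0
| evSucc v : peval pSucc v (S (hd 0 v))
| evProj i v : peval (pProj i) v (nth i v 0)
| evComp f gs v ws y : pevals gs v ws -> peval f ws y -> peval (pComp f gs) v y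
| evRec0 f g v y : peval f v y -> peval (pRec f g) (0 :: v) y
| evRecS f g n v y z :
    peval (pRec f g) (n :: v) y -> peval g (n :: y :: v) z ->
    peval (pRec f g) (S n :: v) z
| evMu f v n :
    peval f (n :: v) 0 ->
    (forall k, k < n -> exists r, peval f (k :: v) (S r)) ->
    peval (pMu f) v n
with pevals : list prf -> list nat -> list nat -> Prop :=
| evsNil v : pevals nil v nil
| evsCons g gs v y ys : peval g v y -> pevals gs v ys -> pevals (g :: gs) v (y :: ys).

Definition cpair (a b : nat) : nat := (a + b) * (a + b + 1) / 2 + b.

Fixpoint fcode (f : fform) : nat :=
  match f with
  | fEq i j => cpair 0 (cpair i j)
  | fRel i j => cpair 1 (cpair i j)
  | fBot => cpair 2 0
  | fImp a b => cpair 3 (cpair (fcode a) (fcode b))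
  | fAll i a => cpair 4 (cpair i (fcode a))
  end.

Definition decidable_sentences (T : fform -> Prop) : Prop :=
  exists p : prf, forall f, sentence f ->
    (T f -> peval p [fcode f] 1) /\ (~ T f -> peval p [fcode f] 0).

(* Main.v *)
Require Import Defs.
From Stdlib Require Import Arith ZArith List Lia.
Import ListNotations.

Fixpoint Tf (n : nat) : nat := match n with 0 => 0 | S m => Tf m + S m end.

Lemma Tf_div s : Tf s = s * (s + 1) / 2.
Proof.
  induction s; [reflexivity|].
  simpl Tf. rewrite IHs.
  replace (S s * (S s + 1)) with (s * (s + 1) + (S s) * 2) by lia.
  rewrite Nat.div_add by lia. lia.
Qed.

Lemma cpair_Tf a b : cpair a b = Tf (a + b) + b.
Proof. unfold cpair. rewrite Tf_div. reflexivity. Qed.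

Lemma Tf_mono s s' : s <= s' -> Tf s <= Tf s'.
Proof. induction 1; simpl; lia. Qed.

Lemma cpair_inj a b a' b' : cpair a b = cpair a' b' -> a = a' /\ b = b'.
Proof.
  rewrite !cpair_Tf. intros H.
  destruct (lt_eq_lt_dec (a+b) (a'+b')) as [[Hl|He]|Hg].
  - pose proof (Tf_mono (S (a+b)) (a'+b') Hl). simpl in H0. lia.
  - rewrite He in H. lia.
  - pose proof (Tf_mono (S (a'+b')) (a+b) Hg). simpl in H0. lia.
Qed.

Lemma cpair_S_r a b : cpair a (S b) = S (cpair (S a) b).
Proof. rewrite !cpair_Tf. replace (a + S b) with (S a + b) by lia. lia. Qed.

Lemma cpair_S_0 b : cpair (S b) 0 = S (cpair 0 b).
Proof. rewrite !cpair_Tf. replace (S b + 0) with (S (0 + b)) by lia. simpl. lia. Qed.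

Fixpoint lcode (l : list nat) : nat :=
  match l with [] => 0 | n :: l' => S (cpair n (lcode l')) end.

Lemma lcode_inj l l' : lcode l = lcode l' -> l = l'.
Proof.
  revert l'; induction l as [|n l IH]; destruct l' as [|n' l']; simpl; intros H; try discriminate; auto.
  injection H as H. apply cpair_inj in H as [-> H]. f_equal; auto.
Qed.

Fixpoint pcode (p : prf) : nat :=
  match p with
  | pZero => cpair 0 0
  | pSucc => cpair 1 0
  | pProj i => cpair 2 i
  | pComp f gs => cpair 3 (cpair (pcode f)
       ((fix pcs (l : list prf) : nat := match l with [] => 0 | g :: l' => S (cpair (pcode g) (pcs l')) end) gs))
  | pRec f g => cpair 4 (cpair (pcode f) (pcode g))
  | pMu f => cpair 5 (pcode f)
  end.

Fixpoint pcodes (l : list prf) : nat :=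
  match l with [] => 0 | g :: l' => S (cpair (pcode g) (pcodes l')) end.

Lemma pcode_comp f gs : pcode (pComp f gs) = cpair 3 (cpair (pcode f) (pcodes gs)).
Proof. simpl. do 2 f_equal; try (induction gs; simpl; congruence). Qed.

Fixpoint natprog (i : nat) : prf := match i with 0 => pZero | S j => pComp pSucc [natprog j] end.

Lemma natprog_ok i v : peval (natprog i) v i.
Proof.
  induction i; simpl. constructor.
  econstructor. econstructor. exact IHi. constructor. apply (evSucc [i]).
Qed.

Arguments natprog : simpl never.

Definition addP : prf := pRec (pProj 0) (pComp pSucc [pProj 1]).

Lemma addP_ok a b : peval addP [a; b] (a + b).
Proof.
  induction a; simpl.
  - apply evRec0. apply (evProj 0 [b]).
  - eapply evRecS. exact IHa.
    econstructor. econstructor. apply (evProj 1 [a; a+b; b]). constructor. constructor.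
Qed.

Definition TP : prf := pRec pZero (pComp addP [pProj 1; pComp pSucc [pProj 0]]).

Lemma TP_ok n : peval TP [n] (Tf n).
Proof.
  induction n; simpl.
  - apply evRec0. constructor.
  - eapply evRecS. exact IHn.
    econstructor.
    + econstructor. apply (evProj 1 [n; Tf n]).
      econstructor. econstructor. econstructor. apply (evProj 0 [n; Tf n]). constructor. constructor.
      constructor.
    + apply addP_ok.
Qed.

Definition cpairP : prf := pComp addP [pComp TP [addP]; pProj 1].

Lemma cpairP_ok a b : peval cpairP [a; b] (cpair a b).
Proof.
  rewrite cpair_Tf. econstructor.
  - econstructor. econstructor. econstructor. apply addP_ok. constructor. apply TP_ok.
    econstructor. apply (evProj 1 [a; b]). constructor.
  - apply addP_ok.
Qed.

Definition binP (P Q : prf) : prf := pComp cpairP [P; Q].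

Lemma binP_ok P Q v a b : peval P v a -> peval Q v b -> peval (binP P Q) v (cpair a b).
Proof.
  intros. econstructor. econstructor. eauto. econstructor. eauto. constructor. apply cpairP_ok.
Qed.

Fixpoint fprog (f : fform) : prf :=
  match f with
  | fEq i j => binP (natprog 0) (binP (natprog i) (natprog j))
  | fRel i j => binP (natprog 1) (binP (natprog i) (natprog j))
  | fBot => binP (natprog 2) (natprog 0)
  | fImp a b => binP (natprog 3) (binP (fprog a) (fprog b))
  | fAll i a => binP (natprog 4) (binP (natprog i) (fprog a))
  end.

Lemma fprog_ok f v : peval (fprog f) v (fcode f).
Proof.
  induction f; simpl; repeat apply binP_ok; auto using natprog_ok.
Qed.

Inductive fctx : Type :=
| CHole : fctx
| CImpL : fctx -> fform -> fctx
| CImpR : fform -> fctx -> fctx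
| CAll : nat -> fctx -> fctx.

Fixpoint fill (c : fctx) (p : fform) : fform :=
  match c with
  | CHole => p
  | CImpL c b => fImp (fill c p) b
  | CImpR a c => fImp a (fill c p)
  | CAll i c => fAll i (fill c p)
  end.

Fixpoint ctxprog (c : fctx) : prf :=
  match c with
  | CHole => pProj 0
  | CImpL c b => binP (natprog 3) (binP (ctxprog c) (fprog b))
  | CImpR a c => binP (natprog 3) (binP (fprog a) (ctxprog c))
  | CAll i c => binP (natprog 4) (binP (natprog i) (ctxprog c))
  end.

Lemma ctxprog_ok c p v : peval (ctxprog c) (fcode p :: v) (fcode (fill c p)).
Proof.
  induction c; simpl; repeat apply binP_ok; auto using natprog_ok, fprog_ok.
  apply (evProj 0 (fcode p :: v)).
Qed.
Fixpoint peval_det p v y (H : peval p v y) {struct H} : forall y', peval p v y' -> y = y'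
with pevals_det gs v ws (H : pevals gs v ws) {struct H} : forall ws', pevals gs v ws' -> ws = ws'.
Proof.
  - destruct H; intros y' H'; inversion H'; subst.
    + reflexivity.
    + reflexivity.
    + reflexivity.
    + match goal with HH : pevals gs v ?w |- _ => pose proof (pevals_det _ _ _ H _ HH); subst end.
      match goal with HH : peval f _ y' |- _ => exact (peval_det _ _ _ H0 _ HH) end.
    + match goal with HH : peval f v y' |- _ => exact (peval_det _ _ _ H _ HH) end.
    + match goal with HH : peval (pRec f g) (n :: v) ?w |- _ => pose proof (peval_det _ _ _ H _ HH); subst end.
      match goal with HH : peval g _ y' |- _ => exact (peval_det _ _ _ H0 _ HH) end.
    + rename H into Hz. destruct (lt_eq_lt_dec n y') as [[Hlt|Heq]|Hgt]; auto.
      * match goal with HH : forall k, k < y' -> _ |- _ => destruct (HH n Hlt) as [r Hr] end.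
        pose proof (peval_det _ _ _ Hz _ Hr). discriminate.
      * destruct (H0 y' Hgt) as [r Hr].
        match goal with HH : peval f (y' :: v) 0 |- _ => pose proof (peval_det _ _ _ Hr _ HH) end. discriminate.
  - destruct H; intros ws' H'; inversion H'; subst.
    + reflexivity.
    + match goal with HH : peval g v ?w |- _ => pose proof (peval_det _ _ _ H _ HH); subst end.
      f_equal. match goal with HH : pevals gs v _ |- _ => exact (pevals_det _ _ _ H0 _ HH) end.
Qed.
From Stdlib Require Import Classical FunctionalExtensionality.

Definition fNot (a : fform) : fform := fImp a fBot.
Definition fAnd (a b : fform) : fform := fNot (fImp a (fNot b)).
Definition fEx (i : nat) (a : fform) : fform := fNot (fAll i (fNot a)).
Definition fConj (l : list fform) : fform := fold_right fAnd (fNot fBot) l.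
Definition fAlls (vs : list nat) (a : fform) : fform := fold_right fAll a vs.
Definition fImps (l : list fform) (c : fform) : fform := fold_right fImp c l.

Section Sem.
Variable W : Type.
Variable R : W -> W -> Prop.

Lemma fsat_and e a b : fsat R e (fAnd a b) <-> fsat R e a /\ fsat R e b.
Proof. simpl. tauto. Qed.

Lemma fsat_ex e i a : fsat R e (fEx i a) <-> exists x, fsat R (upd e i x) a.
Proof.
  simpl. split.
  - intros H. apply NNPP. intros H'. apply H. intros x Hx. apply H'. eauto.
  - intros [x Hx] H. exact (H x Hx).
Qed.

Lemma fsat_conj e l : fsat R e (fConj l) <-> fold_right (fun a acc => fsat R e a /\ acc) True l.
Proof.
  induction l; simpl. tauto. rewrite <- IHl. simpl. tauto.
Qed.

Lemma fsat_imps e l c : fsat R e (fImps l c) <->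
  (fold_right (fun a acc => fsat R e a /\ acc) True l -> fsat R e c).
Proof.
  induction l; simpl. tauto. rewrite IHl. tauto.
Qed.

Lemma fsat_alls vs a e : fsat R e (fAlls vs a) <->
  forall e', (forall j, ~ In j vs -> e' j = e j) -> fsat R e' a.
Proof.
  revert e; induction vs as [|v vs IH]; intros e; simpl.
  - split.
    + intros H e' He. replace e' with e; auto. extensionality j. symmetry; auto.
    + intros H. apply H. auto.
  - split.
    + intros H e' He. specialize (H (e' v)). rewrite IH in H. apply H.
      intros j Hj. unfold upd. destruct (Nat.eqb_spec j v). subst; auto.
      apply He. intros [?|?]; auto.
    + intros H x. rewrite IH. intros e' He. apply H. intros j Hj.
      rewrite He by tauto. unfold upd. destruct (Nat.eqb_spec j v); auto. exfalso; auto.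
Qed.

Definition Ed (x y : W) : Prop := x <> y /\ exists r, ~ R r r /\ R r x /\ R r y.
Definition NumS (m : nat -> W) (x : W) : Prop := Ed x (m 0).
Definition ZeroS (m : nat -> W) (x : W) : Prop := Ed x (m 1).
Definition RelSem (m : nat -> W) (k : nat) (x y z : W) : Prop :=
  exists g p1 p2 p3, Ed g (m (5 + k)) /\ Ed g p1 /\ Ed p1 (m 2) /\ Ed p1 x /\
    Ed g p2 /\ Ed p2 (m 3) /\ Ed p2 y /\ Ed g p3 /\ Ed p3 (m 4) /\ Ed p3 z.

End Sem.
Arguments Ed {W} R x y.
Arguments NumS {W} R m x.
Arguments ZeroS {W} R m x.
Arguments RelSem {W} R m k x y z.

Definition fE (x y : nat) : fform :=
  fAnd (fNot (fEq x y)) (fEx 11 (fAnd (fNot (fRel 11 11)) (fAnd (fRel 11 x) (fRel 11 y)))).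
Definition fNum (x : nat) : fform := fE x 0.
Definition fZero (x : nat) : fform := fE x 1.
Definition fRelK (k x y z : nat) : fform :=
  fEx 12 (fEx 13 (fEx 14 (fEx 15 (fConj
   [fE 12 (5 + k); fE 12 13; fE 13 2; fE 13 x; fE 12 14; fE 14 3; fE 14 y;
    fE 12 15; fE 15 4; fE 15 z])))).
Definition fSucc (x y : nat) : fform := fRelK 1 x y y.

Ltac eqb_solve :=
  repeat match goal with
  | |- context [Nat.eqb ?a ?b] => destruct (Nat.eqb_spec a b); try (exfalso; lia)
  | H : context [Nat.eqb ?a ?b] |- _ => destruct (Nat.eqb_spec a b); try (exfalso; lia)
  end.

Lemma fsat_fE W (R : W -> W -> Prop) e x y : x <> 11 -> y <> 11 ->
  fsat R e (fE x y) <-> Ed R (e x) (e y).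
Proof.
  intros Hx Hy. unfold fE. rewrite fsat_and, fsat_ex. simpl. unfold Ed, upd.
  eqb_solve. split.
  - intros [H1 [r H2]]. split; auto. exists r.
    destruct (classic (R r r)), (classic (R r (e x))), (classic (R r (e y))); tauto.
  - intros [H1 [r (H2 & H3 & H4)]]. split; auto. exists r. tauto.
Qed.

Lemma fsat_fRelK W (R : W -> W -> Prop) e k x y z : k <= 5 ->
  ~ (11 <= x <= 15) -> ~ (11 <= y <= 15) -> ~ (11 <= z <= 15) ->
  fsat R e (fRelK k x y z) <-> RelSem R e k (e x) (e y) (e z).
Proof.
  intros Hk Hx Hy Hz. unfold fRelK, RelSem.
  split.
  - intros H. apply fsat_ex in H as [g H]. apply fsat_ex in H as [p1 H].
    apply fsat_ex in H as [p2 H]. apply fsat_ex in H as [p3 H].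
    apply fsat_conj in H. cbn [fold_right] in H. rewrite !fsat_fE in H by lia.
    exists g, p1, p2, p3. unfold upd in H. eqb_solve. tauto.
  - intros (g & p1 & p2 & p3 & H).
    apply fsat_ex; exists g. apply fsat_ex; exists p1. apply fsat_ex; exists p2. apply fsat_ex; exists p3.
    apply fsat_conj. cbn [fold_right]. rewrite !fsat_fE by lia. unfold upd. eqb_solve. tauto.
Qed.

Inductive atom : Type := AZero (i : nat) | ARel (k i j l : nat).
Record rule : Type := mkRule { rnv : nat; rprem : list atom; rcon : atom }.

Definition atomF (a : atom) : fform :=
  match a with
  | AZero i => fZero (20 + i)
  | ARel k i j l => fRelK k (20 + i) (20 + j) (20 + l)
  end.

Definition ruleF (r : rule) : fform :=
  fAlls (seq 20 (rnv r)) (fImps (map fNum (seq 20 (rnv r)))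
     (fImps (map atomF (rprem r)) (atomF (rcon r)))).

Definition atom_wf (n : nat) (a : atom) : bool :=
  match a with
  | AZero i => Nat.ltb i n
  | ARel k i j l => andb (andb (andb (Nat.leb k 5) (Nat.ltb i n)) (Nat.ltb j n)) (Nat.ltb l n)
  end.

Definition rule_wf (r : rule) : bool := forallb (atom_wf (rnv r)) (rcon r :: rprem r).

Definition magree {W} (m1 m2 : nat -> W) : Prop := forall j, j < 11 -> m1 j = m2 j.

Section Sem2.
Variable W : Type.
Variable R : W -> W -> Prop.

Definition atomS (m : nat -> W) (rho : nat -> W) (a : atom) : Prop :=
  match a with
  | AZero i => ZeroS R m (rho i)
  | ARel k i j l => RelSem R m k (rho i) (rho j) (rho l)
  end.

Definition ruleS (m : nat -> W) (r : rule) : Prop :=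
  forall rho : nat -> W, (forall i, i < rnv r -> NumS R m (rho i)) ->
    fold_right (fun a acc => atomS m rho a /\ acc) True (rprem r) -> atomS m rho (rcon r).

Lemma fold_and_forall {A} (P : A -> Prop) l :
  fold_right (fun a acc => P a /\ acc) True l <-> (forall a, In a l -> P a).
Proof.
  induction l; simpl. split; auto; tauto.
  rewrite IHl. split. intros [H1 H2] b [->|Hb]; auto. intros H; split; auto.
Qed.

Lemma NumS_congr m1 m2 x : magree m1 m2 -> NumS R m1 x <-> NumS R m2 x.
Proof. intros H. unfold NumS. rewrite (H 0) by lia. tauto. Qed.
Lemma ZeroS_congr m1 m2 x : magree m1 m2 -> ZeroS R m1 x <-> ZeroS R m2 x.
Proof. intros H. unfold ZeroS. rewrite (H 1) by lia. tauto. Qed.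
Lemma RelSem_congr m1 m2 k x y z : magree m1 m2 -> k <= 5 ->
  RelSem R m1 k x y z <-> RelSem R m2 k x y z.
Proof.
  intros H Hk. unfold RelSem. rewrite (H (5 + k)), (H 2), (H 3), (H 4) by lia. tauto.
Qed.

Lemma atomS_ext n a m1 m2 rho1 rho2 : atom_wf n a = true ->
  (forall i, i < n -> rho1 i = rho2 i) -> magree m1 m2 ->
  atomS m1 rho1 a <-> atomS m2 rho2 a.
Proof.
  intros Hwf Hr Hm. destruct a; simpl in *.
  - apply Nat.ltb_lt in Hwf. rewrite Hr by auto. apply ZeroS_congr; auto.
  - repeat rewrite Bool.andb_true_iff in Hwf.
    destruct Hwf as [[[H1 H2] H3] H4].
    apply Nat.leb_le in H1. apply Nat.ltb_lt in H2. apply Nat.ltb_lt in H3. apply Nat.ltb_lt in H4.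
    rewrite !Hr by auto. apply RelSem_congr; auto.
Qed.

Lemma atomF_sem n e a : atom_wf n a = true ->
  fsat R e (atomF a) <-> atomS e (fun i => e (20 + i)) a.
Proof.
  intros Hwf. destruct a; unfold atomF, atomS.
  - unfold fZero. rewrite fsat_fE by lia. reflexivity.
  - simpl in Hwf. repeat rewrite Bool.andb_true_iff in Hwf.
    destruct Hwf as [[[H1 _] _] _]. apply Nat.leb_le in H1.
    rewrite fsat_fRelK by lia. reflexivity.
Qed.

Lemma ruleF_sem r e : rule_wf r = true -> (fsat R e (ruleF r) <-> ruleS e r).
Proof.
  intros Hwf. unfold rule_wf in Hwf. rewrite forallb_forall in Hwf.
  unfold ruleF, ruleS. rewrite fsat_alls. split.
  - intros H rho Hnum Hprem.
    set (e' := fun j => if andb (Nat.leb 20 j) (Nat.ltb j (20 + rnv r)) then rho (j - 20) else e j).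
    assert (Hag : magree e' e).
    { intros j Hj. unfold e'. destruct (Nat.leb_spec 20 j); simpl; [lia|auto]. }
    assert (Hrho : forall i, i < rnv r -> e' (20 + i) = rho i).
    { intros i Hi. unfold e'. destruct (Nat.leb_spec 20 (20 + i)); [|lia].
      destruct (Nat.ltb_spec (20 + i) (20 + rnv r)); [|lia]. simpl. f_equal. lia. }
    specialize (H e'). rewrite fsat_imps, fsat_imps in H.
    rewrite <- (atomS_ext (rnv r) (rcon r) e' e (fun i => e' (20 + i)) rho); auto.
    rewrite <- atomF_sem with (n := rnv r); auto.
    apply H.
    + intros j Hj. unfold e'. rewrite in_seq in Hj.
      destruct (Nat.leb_spec 20 j), (Nat.ltb_spec j (20 + rnv r)); simpl; auto; lia.
    + apply fold_and_forall. intros a Ha. apply in_map_iff in Ha as [j [<- Hj]].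
      apply in_seq in Hj. unfold fNum. rewrite fsat_fE by lia.
      replace j with (20 + (j - 20)) by lia. rewrite Hrho by lia.
      rewrite (Hag 0) by lia. apply Hnum. lia.
    + apply fold_and_forall. intros a Ha. apply in_map_iff in Ha as [b [<- Hb]].
      rewrite atomF_sem with (n := rnv r) by (apply Hwf; simpl; auto).
      rewrite (atomS_ext (rnv r) b e' e (fun i => e' (20 + i)) rho); auto.
      rewrite fold_and_forall in Hprem. auto. apply Hwf; simpl; auto.
    + apply Hwf; simpl; auto.
    + apply Hwf; simpl; auto.
  - intros H e' He. rewrite fsat_imps, fsat_imps. intros Hn Hp.
    assert (Hag : magree e' e).
    { intros j Hj. apply He. rewrite in_seq. lia. }
    rewrite atomF_sem with (n := rnv r) by (apply Hwf; simpl; auto).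
    rewrite (atomS_ext (rnv r) (rcon r) e' e (fun i => e' (20 + i)) (fun i => e' (20 + i))); auto.
    apply H.
    + intros i Hi. rewrite fold_and_forall in Hn.
      specialize (Hn (fNum (20 + i))). unfold fNum in Hn. rewrite fsat_fE in Hn by lia.
      unfold NumS. rewrite <- (Hag 0) by lia. apply Hn. apply in_map_iff. exists (20 + i). split; [reflexivity| apply in_seq; lia].
    + apply fold_and_forall. intros a Ha. rewrite fold_and_forall in Hp.
      specialize (Hp (atomF a) (in_map _ _ _ Ha)).
      rewrite atomF_sem with (n := rnv r) in Hp by (apply Hwf; simpl; auto).
      rewrite (atomS_ext (rnv r) a e' e (fun i => e' (20 + i)) (fun i => e' (20 + i))) in Hp; auto.
      apply Hwf; simpl; auto.
    + apply Hwf; simpl; auto.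
Qed.

End Sem2.

Definition aPair i j l := ARel 0 i j l.
Definition aSucc i j := ARel 1 i j j.
Definition aNth i j l := ARel 2 i j l.
Definition aEv i j l := ARel 3 i j l.
Definition aEvs i j l := ARel 4 i j l.
Definition aMu i j l := ARel 5 i j l.

Definition rules : list rule := [
  mkRule 1 [AZero 0] (aPair 0 0 0);
  mkRule 6 [aPair 1 2 4; aSucc 0 1; aSucc 2 3; aSucc 4 5] (aPair 0 3 5);
  mkRule 5 [AZero 0; aPair 0 1 2; aSucc 1 3; aSucc 2 4] (aPair 3 0 4);
  mkRule 2 [AZero 1] (aNth 0 1 1);
  mkRule 5 [AZero 0; aPair 1 2 3; aSucc 3 4] (aNth 0 4 1);
  mkRule 7 [aSucc 0 1; aNth 0 2 3; aPair 4 2 5; aSucc 5 6] (aNth 1 6 3);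
  mkRule 3 [AZero 2; aPair 2 2 0] (aEv 0 1 2);
  mkRule 6 [AZero 3; aSucc 3 4; aPair 4 3 0; aNth 3 1 5; aSucc 5 2] (aEv 0 1 2);
  mkRule 7 [AZero 3; aSucc 3 4; aSucc 4 5; aPair 5 6 0; aNth 6 1 2] (aEv 0 1 2);
  mkRule 11 [AZero 3; aSucc 3 4; aSucc 4 5; aSucc 5 6; aPair 6 7 0; aPair 8 9 7;
             aEvs 9 1 10; aEv 8 10 2] (aEv 0 1 2);
  mkRule 13 [AZero 3; aSucc 3 4; aSucc 4 5; aSucc 5 6; aSucc 6 7; aPair 7 8 0; aPair 9 10 8;
             aPair 3 11 12; aSucc 12 1; aEv 9 11 2] (aEv 0 1 2);
  mkRule 22 [AZero 3; aSucc 3 4; aSucc 4 5; aSucc 5 6; aSucc 6 7; aPair 7 8 0; aPair 9 10 8;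
             aSucc 11 12; aPair 12 13 21; aSucc 21 1; aPair 11 13 14; aSucc 14 15;
             aEv 0 15 16; aPair 16 13 17; aSucc 17 18; aPair 11 18 19; aSucc 19 20;
             aEv 10 20 2] (aEv 0 1 2);
  mkRule 12 [AZero 3; aSucc 3 4; aSucc 4 5; aSucc 5 6; aSucc 6 7; aSucc 7 8; aPair 8 9 0;
             aPair 2 1 10; aSucc 10 11; aEv 9 11 3; aMu 9 1 2] (aEv 0 1 2);
  mkRule 2 [AZero 0] (aEvs 0 1 0);
  mkRule 9 [aEvs 0 1 2; aEv 3 1 4; aPair 3 0 5; aSucc 5 6; aPair 4 2 7; aSucc 7 8] (aEvs 6 1 8);
  mkRule 3 [AZero 2] (aMu 0 1 2);
  mkRule 8 [aMu 0 1 2; aSucc 2 3; aPair 2 1 4; aSucc 4 5; aEv 0 5 6; aSucc 7 6] (aMu 0 1 3)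
].

Lemma rules_wf : forall r, In r rules -> rule_wf r = true.
Proof. apply forallb_forall. vm_compute. reflexivity. Qed.

Definition exZeroF : fform := fEx 16 (fAnd (fNum 16) (fZero 16)).
Definition succTotF : fform := fAll 16 (fImp (fNum 16) (fEx 17 (fAnd (fNum 17) (fSucc 16 17)))).
Definition AxF : fform := fConj (exZeroF :: succTotF :: map ruleF rules).

Fixpoint NF (x : nat) : fform :=
  match x with
  | 0 => fAnd (fNum 16) (fZero 16)
  | S y => fEx 17 (fAnd (fAnd (fNum 17) (fSucc 17 16)) (fAll 16 (fImp (fEq 16 17) (NF y))))
  end.

Definition RestF : fform :=
  fEx 18 (fEx 19 (fEx 20 (fConj [fNum 16; fNum 18; fZero 18; fNum 19; fRelK 0 16 18 19; fNum 20;
     fSucc 19 20; fRelK 3 16 20 18]))).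

Definition GoalF (x : nat) : fform := fEx 16 (fAnd (NF x) RestF).

Definition sigmaF (x : nat) : fform := fAlls (seq 0 11) (fImp AxF (GoalF x)).

Section Sem3.
Variable W : Type.
Variable R : W -> W -> Prop.

Definition AxS (m : nat -> W) : Prop :=
  (exists z, NumS R m z /\ ZeroS R m z) /\
  (forall x, NumS R m x -> exists y, NumS R m y /\ RelSem R m 1 x y y) /\
  (forall r, In r rules -> ruleS W R m r).

Fixpoint NameS (m : nat -> W) (x : nat) (a : W) : Prop :=
  match x with
  | 0 => NumS R m a /\ ZeroS R m a
  | S y => exists b, (NumS R m b /\ RelSem R m 1 b a a) /\ NameS m y b
  end.

Definition RestS (m : nat -> W) (a : W) : Prop :=
  exists z p v, NumS R m a /\ NumS R m z /\ ZeroS R m z /\ NumS R m p /\ RelSem R m 0 a z p /\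
    NumS R m v /\ RelSem R m 1 p v v /\ RelSem R m 3 a v z.

Definition GoalS (m : nat -> W) (x : nat) : Prop := exists a, NameS m x a /\ RestS m a.

Lemma magree_upd (e : nat -> W) j (x : W) : 11 <= j -> magree (upd e j x) e.
Proof. intros Hj i Hi. unfold upd. destruct (Nat.eqb_spec i j); auto; lia. Qed.

Lemma upd_eq (e : nat -> W) j x : upd e j x j = x.
Proof. unfold upd. rewrite Nat.eqb_refl. reflexivity. Qed.

Lemma upd_neq (e : nat -> W) j x i : i <> j -> upd e j x i = e i.
Proof. intros H. unfold upd. destruct (Nat.eqb_spec i j); congruence. Qed.

Lemma magree_sym (m1 m2 : nat -> W) : magree m1 m2 -> magree m2 m1.
Proof. intros H j Hj. symmetry; auto. Qed.

Lemma magree_trans (m1 m2 m3 : nat -> W) : magree m1 m2 -> magree m2 m3 -> magree m1 m3.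
Proof. intros H1 H2 j Hj. rewrite H1; auto. Qed.

Lemma ruleS_congr m1 m2 r : rule_wf r = true -> magree m1 m2 -> ruleS W R m1 r -> ruleS W R m2 r.
Proof.
  intros Hwf Hm H rho Hn Hp. unfold rule_wf in Hwf. rewrite forallb_forall in Hwf.
  rewrite <- (atomS_ext W R (rnv r) (rcon r) m1 m2 rho rho); auto.
  2: apply Hwf; simpl; auto.
  apply H.
  - intros i Hi. apply (NumS_congr W R m1 m2); auto.
  - rewrite fold_and_forall in *. intros a Ha.
    rewrite (atomS_ext W R (rnv r) a m1 m2 rho rho); auto. apply Hwf; simpl; auto.
Qed.

Lemma NameS_congr m1 m2 x a : magree m1 m2 -> NameS m1 x a <-> NameS m2 x a.
Proof.
  intros Hm. revert a; induction x; intros a; simpl.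
  - rewrite (NumS_congr W R m1 m2), (ZeroS_congr W R m1 m2); auto. tauto.
  - split; intros [b [[H1 H2] H3]]; exists b; rewrite IHx in *;
    rewrite (NumS_congr W R m1 m2), (RelSem_congr W R m1 m2) in *; auto.
Qed.

Lemma AxF_sem e : fsat R e AxF <-> AxS e.
Proof.
  unfold AxF. rewrite fsat_conj. cbn [fold_right]. unfold AxS.
  assert (Hz : fsat R e exZeroF <-> exists z, NumS R e z /\ ZeroS R e z).
  { unfold exZeroF. rewrite fsat_ex.
    split; intros [z Hz]; exists z; revert Hz; rewrite fsat_and; unfold fNum, fZero;
      rewrite !fsat_fE by lia; unfold upd; simpl; auto. }
  assert (Hs : fsat R e succTotF <-> forall x, NumS R e x -> exists y, NumS R e y /\ RelSem R e 1 x y y).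
  { unfold succTotF. cbn [fsat]. split.
    - intros H x Hx. specialize (H x). unfold fNum in H. rewrite fsat_fE in H by lia.
      rewrite upd_eq, upd_neq in H by lia. specialize (H Hx). apply fsat_ex in H as [y H].
      apply fsat_and in H as [H1 H2]. unfold fNum in H1. rewrite fsat_fE in H1 by lia.
      unfold fSucc in H2. rewrite fsat_fRelK in H2 by lia.
      unfold upd in H1, H2; simpl in H1, H2.
      exists y. split. exact H1.
      rewrite (RelSem_congr W R _ e) in H2. exact H2.
      apply magree_trans with (upd e 16 x); apply magree_upd; lia. lia.
    - intros H x Hx. unfold fNum in Hx. rewrite fsat_fE in Hx by lia.
      rewrite upd_eq, upd_neq in Hx by lia. destruct (H x Hx) as [y [H1 H2]].
      apply fsat_ex. exists y. apply fsat_and. unfold fNum, fSucc. rewrite fsat_fE, fsat_fRelK by lia.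
      unfold upd at 1 2 3 4 5; simpl. split. exact H1.
      rewrite (RelSem_congr W R _ e). exact H2.
      apply magree_trans with (upd e 16 x); apply magree_upd; lia. lia. }
  rewrite Hz, Hs. rewrite fold_and_forall.
  assert (Hr : (forall a, In a (map ruleF rules) -> fsat R e a) <-> (forall r, In r rules -> ruleS W R e r)).
  { split.
    - intros H r Hr. rewrite <- ruleF_sem by (apply rules_wf; auto). apply H. apply in_map; auto.
    - intros H a Ha. apply in_map_iff in Ha as [r [<- Hr]]. rewrite ruleF_sem by (apply rules_wf; auto).
      auto. }
  rewrite Hr. tauto.
Qed.

End Sem3.

Section Sem4.
Variable W : Type.
Variable R : W -> W -> Prop.

Lemma RestS_congr (m1 m2 : nat -> W) a : magree m1 m2 -> RestS W R m1 a <-> RestS W R m2 a.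
Proof.
  intros H. unfold RestS, NumS, ZeroS, RelSem. simpl.
  rewrite (H 0), (H 1), (H 2), (H 3), (H 4), (H 5), (H 6), (H 8) by lia. reflexivity.
Qed.

Lemma NF_sem x e : fsat R e (NF x) <-> NameS W R e x (e 16).
Proof.
  revert e; induction x; intros e.
  - unfold NF. rewrite fsat_and. unfold fNum, fZero. rewrite !fsat_fE by lia. reflexivity.
  - cbn [NF NameS]. rewrite fsat_ex. split.
    + intros [b H]. apply fsat_and in H as [H1 H2]. apply fsat_and in H1 as [H1 H3].
      unfold fNum in H1. unfold fSucc in H3. rewrite fsat_fE in H1 by lia.
      rewrite fsat_fRelK in H3 by lia.
      specialize (H2 b). cbn [fsat] in H2. rewrite upd_eq, upd_neq, upd_eq in H2 by lia.
      specialize (H2 eq_refl). rewrite IHx in H2. rewrite upd_eq in H2.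
      exists b. split; [split|].
      * unfold NumS. rewrite upd_eq, upd_neq in H1 by lia. exact H1.
      * rewrite upd_eq, upd_neq in H3 by lia.
        rewrite (RelSem_congr W R _ e) in H3 by (try apply magree_upd; lia). exact H3.
      * rewrite (NameS_congr W R _ e) in H2. exact H2.
        apply magree_trans with (upd e 17 b); apply magree_upd; lia.
    + intros [b [[H1 H3] H2]]. exists b. apply fsat_and. split. apply fsat_and. split.
      * unfold fNum. rewrite fsat_fE by lia. rewrite upd_eq, upd_neq by lia. exact H1.
      * unfold fSucc. rewrite fsat_fRelK by lia. rewrite upd_eq, upd_neq by lia.
        rewrite (RelSem_congr W R _ e) by (try apply magree_upd; lia). exact H3.
      * intros c. cbn [fsat]. rewrite upd_eq, upd_neq, upd_eq by lia. intros ->.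
        rewrite IHx, upd_eq. rewrite (NameS_congr W R _ e). exact H2.
        apply magree_trans with (upd e 17 b); apply magree_upd; lia.
Qed.

Lemma RestF_sem e : fsat R e RestF <-> RestS W R e (e 16).
Proof.
  unfold RestF. split.
  - intros H. apply fsat_ex in H as [z H]. apply fsat_ex in H as [p H]. apply fsat_ex in H as [v H].
    apply fsat_conj in H. cbn [fold_right] in H. unfold fNum, fZero, fSucc in H.
    rewrite !fsat_fE, !fsat_fRelK in H by lia.
    unfold RestS, NumS, ZeroS, RelSem in *. unfold upd in H. simpl in H.
    exists z, p, v. tauto.
  - intros (z & p & v & H).
    apply fsat_ex; exists z. apply fsat_ex; exists p. apply fsat_ex; exists v.
    apply fsat_conj. cbn [fold_right]. unfold fNum, fZero, fSucc.
    rewrite !fsat_fE, !fsat_fRelK by lia.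
    unfold RestS, NumS, ZeroS, RelSem in *. unfold upd. simpl. tauto.
Qed.

Lemma GoalF_sem x e : fsat R e (GoalF x) <-> GoalS W R e x.
Proof.
  unfold GoalF, GoalS. rewrite fsat_ex. split.
  - intros [a H]. apply fsat_and in H as [H1 H2]. rewrite NF_sem in H1. rewrite RestF_sem in H2.
    rewrite upd_eq in H1, H2. exists a. split.
    + rewrite (NameS_congr W R _ e) in H1 by (apply magree_upd; lia). exact H1.
    + rewrite (RestS_congr _ e) in H2 by (apply magree_upd; lia). exact H2.
  - intros [a [H1 H2]]. exists a. apply fsat_and. rewrite NF_sem, RestF_sem, upd_eq. split.
    + rewrite (NameS_congr W R _ e) by (apply magree_upd; lia). exact H1.
    + rewrite (RestS_congr _ e) by (apply magree_upd; lia). exact H2.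
Qed.

Lemma sigma_sem x e : fsat R e (sigmaF x) <->
  forall e', (forall j, 11 <= j -> e' j = e j) -> AxS W R e' -> GoalS W R e' x.
Proof.
  unfold sigmaF. rewrite fsat_alls. split.
  - intros H e' He. specialize (H e'). cbn [fsat] in H. rewrite AxF_sem, GoalF_sem in H.
    apply H. intros j Hj. apply He. rewrite in_seq in Hj. lia.
  - intros H e' He. cbn [fsat]. rewrite AxF_sem, GoalF_sem. apply H.
    intros j Hj. apply He. rewrite in_seq. lia.
Qed.

End Sem4.

Fixpoint fv (f : fform) : list nat :=
  match f with
  | fEq i j => [i; j]
  | fRel i j => [i; j]
  | fBot => []
  | fImp a b => fv a ++ fv b
  | fAll j a => filter (fun i => negb (Nat.eqb i j)) (fv a)
  end.

Lemma free_in_fv i f : free_in i f = true -> In i (fv f).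
Proof.
  induction f; simpl; intros H.
  - apply Bool.orb_true_iff in H as [H|H]; apply Nat.eqb_eq in H; subst; simpl; auto.
  - apply Bool.orb_true_iff in H as [H|H]; apply Nat.eqb_eq in H; subst; simpl; auto.
  - discriminate.
  - apply in_or_app. apply Bool.orb_true_iff in H as [H|H]; auto.
  - apply Bool.andb_true_iff in H as [H1 H2]. apply filter_In. split; auto.
Qed.

Definition clb (B : list nat) (f : fform) : bool :=
  forallb (fun i => existsb (Nat.eqb i) B) (fv f).

Lemma clb_ok B f i : clb B f = true -> free_in i f = true -> In i B.
Proof.
  intros H Hi. apply free_in_fv in Hi. unfold clb in H. rewrite forallb_forall in H.
  apply H in Hi. apply existsb_exists in Hi as [j [Hj Hij]]. apply Nat.eqb_eq in Hij. subst; auto.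
Qed.

Lemma free_and i a b : free_in i (fAnd a b) = orb (free_in i a) (free_in i b).
Proof. simpl. destruct (free_in i a), (free_in i b); reflexivity. Qed.

Lemma free_ex i j a : free_in i (fEx j a) = andb (negb (Nat.eqb i j)) (free_in i a).
Proof. simpl. destruct (negb (Nat.eqb i j)), (free_in i a); reflexivity. Qed.

Lemma free_alls i vs a : free_in i (fAlls vs a) = true -> ~ In i vs /\ free_in i a = true.
Proof.
  induction vs; simpl; intros H. auto.
  apply Bool.andb_true_iff in H as [H1 H2]. apply IHvs in H2 as [H2 H3]. split; auto.
  intros [->|H]; auto. rewrite Nat.eqb_refl in H1. discriminate.
Qed.

Lemma NF_closed x i : free_in i (NF x) = true -> In i (16 :: seq 0 11).
Proof.
  induction x; intros H.
  - apply (clb_ok _ (NF 0)); auto.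
  - cbn [NF] in H. rewrite free_ex, free_and in H.
    apply Bool.andb_true_iff in H as [H1 H2]. apply Bool.negb_true_iff, Nat.eqb_neq in H1.
    apply Bool.orb_true_iff in H2 as [H2|H2].
    + apply (clb_ok (17 :: 16 :: seq 0 11)) in H2. destruct H2; [lia|auto].
      vm_compute. reflexivity.
    + simpl in H2. apply Bool.andb_true_iff in H2 as [H3 H4].
      apply Bool.negb_true_iff, Nat.eqb_neq in H3.
      repeat rewrite Bool.orb_false_r in H4.
      apply Bool.orb_true_iff in H4 as [H4|H4].
      * apply Bool.orb_true_iff in H4 as [H4|H4]; apply Nat.eqb_eq in H4; lia.
      * auto.
Qed.

Lemma sigma_sentence x : sentence (sigmaF x).
Proof.
  intros i. destruct (free_in i (sigmaF x)) eqn:E; auto. exfalso.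
  apply free_alls in E as [H1 H2].
  change (free_in i (fImp AxF (GoalF x))) with (orb (free_in i AxF) (free_in i (GoalF x))) in H2.
  apply Bool.orb_true_iff in H2 as [H2|H2].
  - apply (clb_ok (seq 0 11)) in H2; auto.
  - unfold GoalF in H2. rewrite free_ex, free_and in H2.
    apply Bool.andb_true_iff in H2 as [H3 H4]. apply Bool.negb_true_iff, Nat.eqb_neq in H3.
    apply Bool.orb_true_iff in H4 as [H4|H4].
    + apply NF_closed in H4. destruct H4; [lia|auto].
    + apply (clb_ok (16 :: seq 0 11)) in H4. destruct H4; [lia|auto]. vm_compute. reflexivity.
Qed.

From Stdlib Require Import ClassicalEpsilon.

Arguments cpair : simpl never.

Section Sound.
Variable W : Type.
Variable R : W -> W -> Prop.
Variable m : nat -> W.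
Hypothesis HAx : AxS W R m.

Let Num := NumS R m.
Let Su a b := RelSem R m 1 a b b.

Definition z0 : W := proj1_sig (constructive_indefinite_description _ (proj1 HAx)).

Lemma z0_ok : NumS R m z0 /\ ZeroS R m z0.
Proof. unfold z0. destruct (constructive_indefinite_description _ _). auto. Qed.

Lemma next_ex : forall x, exists y, NumS R m x -> NumS R m y /\ RelSem R m 1 x y y.
Proof.
  intros x. destruct (classic (NumS R m x)) as [H|H].
  - destruct (proj1 (proj2 HAx) x H) as [y Hy]. exists y. auto.
  - exists x. tauto.
Qed.

Definition nxt (x : W) : W := proj1_sig (constructive_indefinite_description _ (next_ex x)).

Lemma nxt_ok x : NumS R m x -> NumS R m (nxt x) /\ RelSem R m 1 x (nxt x) (nxt x).
Proof. unfold nxt. destruct (constructive_indefinite_description _ _). auto. Qed.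

Fixpoint io (n : nat) : W := match n with 0 => z0 | S k => nxt (io k) end.
Arguments io : simpl never.

Lemma io_num n : NumS R m (io n).
Proof. induction n. apply z0_ok. apply (nxt_ok _ IHn). Qed.

Lemma io_zero : ZeroS R m (io 0).
Proof. apply z0_ok. Qed.

Lemma io_succ n : RelSem R m 1 (io n) (io (S n)) (io (S n)).
Proof. apply (nxt_ok _ (io_num n)). Qed.

Definition HR := proj2 (proj2 HAx).

Ltac rule k ns :=
  let H := fresh in
  pose proof (HR (nth k rules (mkRule 0 [] (AZero 0))) ltac:(apply nth_In; simpl; lia)
    (fun i => io (nth i ns 0)) (fun i _ => io_num _)) as H;
  simpl in H; apply H; clear H.

Ltac splits := repeat match goal with |- _ /\ _ => split end.

Lemma pair_fact a0 b0 : RelSem R m 0 (io a0) (io b0) (io (cpair a0 b0)).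
Proof.
  assert (H : forall s b a, a + b = s -> RelSem R m 0 (io a) (io b) (io (cpair a b))).
  { induction s as [|s IH].
    - intros b a Hs. assert (a = 0) by lia. assert (b = 0) by lia. subst.
      replace (cpair 0 0) with 0 by reflexivity.
      rule 0 [0]. splits; auto. apply io_zero.
    - induction b as [|b IHb]; intros a Hs.
      + replace a with (S s) by lia. rewrite cpair_S_0.
        rule 2 [0; s; cpair 0 s; S s; S (cpair 0 s)].
        splits; auto using io_zero, io_succ.
      + rewrite cpair_S_r.
        rule 1 [a; S a; b; S b; cpair (S a) b; S (cpair (S a) b)].
        splits; auto using io_succ. apply IHb. lia. }
  eauto.
Qed.


Lemma nth_fact L i : RelSem R m 2 (io i) (io (lcode L)) (io (nth i L 0)).
Proof.
  revert i; induction L as [|n L IH]; intros i.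
  - replace (nth i [] 0) with 0 by (destruct i; reflexivity).
    rule 3 [i; 0]. splits; auto using io_zero.
  - destruct i as [|i].
    + simpl nth. simpl lcode. rule 4 [0; n; lcode L; cpair n (lcode L); S (cpair n (lcode L))].
      splits; auto using io_zero, io_succ, pair_fact.
    + simpl nth. simpl lcode.
      rule 5 [i; S i; lcode L; nth i L 0; n; cpair n (lcode L); S (cpair n (lcode L))].
      splits; auto using io_zero, io_succ, pair_fact.
Qed.

Lemma hd_nth (L : list nat) : hd 0 L = nth 0 L 0.
Proof. destruct L; reflexivity. Qed.

Fixpoint ev_fact F L y (H : peval F L y) {struct H} :
  RelSem R m 3 (io (pcode F)) (io (lcode L)) (io y)
with evs_fact GL L WL (H : pevals GL L WL) {struct H} :
  RelSem R m 4 (io (pcodes GL)) (io (lcode L)) (io (lcode WL)).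
Proof.
  - destruct H.
    + simpl pcode. rule 6 [cpair 0 0; lcode v; 0]. splits; auto using io_zero, pair_fact.
    + simpl pcode. rule 7 [cpair 1 0; lcode v; S (hd 0 v); 0; 1; hd 0 v].
      splits; auto using io_zero, io_succ, pair_fact.
      rewrite hd_nth. apply nth_fact.
    + simpl pcode. rule 8 [cpair 2 i; lcode v; nth i v 0; 0; 1; 2; i].
      splits; auto using io_zero, io_succ, pair_fact, nth_fact.
    + rewrite pcode_comp.
      rule 9 [cpair 3 (cpair (pcode f) (pcodes gs)); lcode v; y; 0; 1; 2; 3;
              cpair (pcode f) (pcodes gs); pcode f; pcodes gs; lcode ws].
      splits; auto using io_zero, io_succ, pair_fact.
    + simpl pcode. simpl lcode.
      rule 10 [cpair 4 (cpair (pcode f) (pcode g)); S (cpair 0 (lcode v)); y; 0; 1; 2; 3; 4;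
               cpair (pcode f) (pcode g); pcode f; pcode g; lcode v; cpair 0 (lcode v)].
      splits; auto using io_zero, io_succ, pair_fact.
    + pose proof (ev_fact _ _ _ H) as IH1. pose proof (ev_fact _ _ _ H0) as IH2.
      simpl pcode in *. simpl lcode in *.
      rule 11 [cpair 4 (cpair (pcode f) (pcode g)); S (cpair (S n) (lcode v)); z; 0; 1; 2; 3; 4;
               cpair (pcode f) (pcode g); pcode f; pcode g; n; S n; lcode v;
               cpair n (lcode v); S (cpair n (lcode v)); y; cpair y (lcode v);
               S (cpair y (lcode v)); cpair n (S (cpair y (lcode v)));
               S (cpair n (S (cpair y (lcode v)))); cpair (S n) (lcode v)].
      splits; auto using io_zero, io_succ, pair_fact.
    + pose proof (ev_fact _ _ _ H) as IH1.
      assert (Hk : forall k, k < n -> exists r,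
                 RelSem R m 3 (io (pcode f)) (io (lcode (k :: v))) (io (S r))).
      { intros k Hlt. destruct (H0 k Hlt) as [r Hr]. exists r. exact (ev_fact _ _ _ Hr). }
      assert (Hmu : forall k, k <= n -> RelSem R m 5 (io (pcode f)) (io (lcode v)) (io k)).
      { induction k as [|k IHk]; intros Hle.
        - rule 15 [pcode f; lcode v; 0]. splits; auto using io_zero.
        - destruct (Hk k ltac:(lia)) as [r Hr]. simpl lcode in Hr.
          rule 16 [pcode f; lcode v; k; S k; cpair k (lcode v); S (cpair k (lcode v)); S r; r].
          splits; auto using io_zero, io_succ, pair_fact. apply IHk. lia. }
      simpl pcode. simpl lcode in IH1.
      rule 12 [cpair 5 (pcode f); lcode v; n; 0; 1; 2; 3; 4; 5; pcode f; cpair n (lcode v);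
               S (cpair n (lcode v))].
      splits; auto using io_zero, io_succ, pair_fact.
  - destruct H.
    + simpl. rule 13 [0; lcode v]. splits; auto using io_zero.
    + pose proof (ev_fact _ _ _ H) as IH1. pose proof (evs_fact _ _ _ H0) as IH2.
      simpl pcodes. simpl lcode.
      rule 14 [pcodes gs; lcode v; lcode ys; pcode g; y; cpair (pcode g) (pcodes gs);
               S (cpair (pcode g) (pcodes gs)); cpair y (lcode ys); S (cpair y (lcode ys))].
      splits; auto using io_zero, io_succ, pair_fact.
Qed.

Lemma name_fact x : NameS W R m x (io x).
Proof.
  induction x; simpl. split. apply io_num. apply io_zero.
  exists (io x). split; auto. split. apply io_num. apply io_succ.
Qed.

Lemma goal_fact P : peval P [pcode P] 0 -> GoalS W R m (pcode P).
Proof.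
  intros H. exists (io (pcode P)). split. apply name_fact.
  exists (io 0), (io (cpair (pcode P) 0)), (io (S (cpair (pcode P) 0))).
  splits; auto using io_num, io_zero, io_succ, pair_fact.
  apply (ev_fact _ _ _ H).
Qed.

End Sound.

Definition NthStd (i v y : nat) : Prop := forall L, v = lcode L -> y = nth i L 0.
Definition EvStd (c v y : nat) : Prop := forall F L, c = pcode F -> v = lcode L -> peval F L y.
Definition EvsStd (gs v ws : nat) : Prop := forall GL L, gs = pcodes GL -> v = lcode L ->
  exists WL, ws = lcode WL /\ pevals GL L WL.
Definition MuStd (f v n : nat) : Prop := forall F L, f = pcode F -> v = lcode L ->
  forall k, k < n -> exists r, peval F (k :: L) (S r).

Definition RelS (k a b c : nat) : Prop :=
  match k with
  | 0 => c = cpair a b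
  | 1 => b = S a /\ c = S a
  | 2 => NthStd a b c
  | 3 => EvStd a b c
  | 4 => EvsStd a b c
  | 5 => MuStd a b c
  | _ => False
  end.

Inductive vtx : Type :=
| VNum (n : nat) | VMNum | VMZero | VMPort (i : nat) | VMRel (k : nat)
| VGad (k a b c : nat) | VPort (k a b c i : nat).

Definition adj (u v : vtx) : Prop :=
  match u, v with
  | VNum _, VMNum => True
  | VNum n, VMZero => n = 0
  | VGad k a b c, VMRel k' => k = k' /\ RelS k a b c
  | VGad k a b c, VPort k' a' b' c' i => k = k' /\ a = a' /\ b = b' /\ c = c' /\ 1 <= i <= 3
  | VPort k a b c i, VMPort i' => i = i' /\ 1 <= i <= 3
  | VPort k a b c i, VNum n => (i = 1 /\ n = a) \/ (i = 2 /\ n = b) \/ (i = 3 /\ n = c)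
  | _, _ => False
  end.

Definition Esym (u v : vtx) : Prop := adj u v \/ adj v u.

Lemma adj_irrefl u : ~ adj u u.
Proof. destruct u; simpl; try tauto; lia. Qed.

Definition SW : Type := (vtx + {p : vtx * vtx | adj (fst p) (snd p)})%type.

Definition SR (x y : SW) : Prop :=
  match x, y with
  | inl _, inl _ => True
  | inr p, inl v => v = fst (proj1_sig p) \/ v = snd (proj1_sig p)
  | _, _ => False
  end.

Lemma Ed_std x y : Ed SR x y <-> exists u v, x = inl u /\ y = inl v /\ Esym u v.
Proof.
  split.
  - intros [Hne [r (Hr & Hx & Hy)]].
    destruct r as [r|[[a b] Hab]]; simpl in *. tauto.
    destruct x as [x|x]; [|contradiction]. destruct y as [y|y]; [|contradiction].
    exists x, y. split; auto. split; auto. unfold Esym.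
    destruct Hx as [->| ->], Hy as [->| ->]; simpl in *; try tauto; congruence.
  - intros (u & v & -> & -> & [H|H]).
    + split. intros E. injection E as ->. exact (adj_irrefl _ H).
      exists (inr (exist _ (u, v) H)). simpl. auto.
    + split. intros E. injection E as ->. exact (adj_irrefl _ H).
      exists (inr (exist _ (v, u) H)). simpl. auto.
Qed.

Definition stdv (j : nat) : vtx :=
  match j with
  | 0 => VMNum | 1 => VMZero | 2 => VMPort 1 | 3 => VMPort 2 | 4 => VMPort 3
  | S (S (S (S (S k)))) => VMRel k
  end.

Definition stdm (j : nat) : SW := inl (stdv j).

Lemma Num_std x : NumS SR stdm x <-> exists n, x = inl (VNum n).
Proof.
  unfold NumS. rewrite Ed_std. split.
  - intros (u & v & -> & Hv & [H|H]); unfold stdm in Hv; injection Hv as <-; simpl in *.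
    + destruct u; simpl in H; try contradiction. eauto.
    + contradiction.
  - intros [n ->]. exists (VNum n), VMNum. unfold Esym; simpl. auto.
Qed.

Lemma Zero_std x : ZeroS SR stdm x <-> x = inl (VNum 0).
Proof.
  unfold ZeroS. rewrite Ed_std. split.
  - intros (u & v & -> & Hv & [H|H]); unfold stdm in Hv; injection Hv as <-; simpl in *.
    + destruct u; simpl in H; try contradiction. subst; auto.
    + contradiction.
  - intros ->. exists (VNum 0), VMZero. unfold Esym; simpl. auto.
Qed.

Lemma Ed_inl u v : Ed SR (inl u) (inl v) <-> Esym u v.
Proof.
  rewrite Ed_std. split.
  - intros (u' & v' & E1 & E2 & H). injection E1 as ->. injection E2 as ->. auto.
  - intros H. eauto.
Qed.

Lemma Ed_inr_l p y : ~ Ed SR (inr p) y.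
Proof. rewrite Ed_std. intros (u & v & E & _). discriminate. Qed.
Lemma Ed_inr_r p y : ~ Ed SR y (inr p).
Proof. rewrite Ed_std. intros (u & v & _ & E & _). discriminate. Qed.

Lemma Rel_std k a b c : k <= 5 ->
  RelSem SR stdm k (inl (VNum a)) (inl (VNum b)) (inl (VNum c)) <-> RelS k a b c.
Proof.
  intros Hk. unfold RelSem. split.
  - intros (g & p1 & p2 & p3 & H1 & H2 & H3 & H4 & H5 & H6 & H7 & H8 & H9 & H10).
    destruct g as [g|g]; [|exfalso; eapply Ed_inr_l; eauto].
    destruct p1 as [p1|p1]; [|exfalso; eapply Ed_inr_l; eauto].
    destruct p2 as [p2|p2]; [|exfalso; eapply Ed_inr_l; eauto].
    destruct p3 as [p3|p3]; [|exfalso; eapply Ed_inr_l; eauto].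
    unfold stdm in *. rewrite !Ed_inl in *.
    replace (stdv (5 + k)) with (VMRel k) in H1 by reflexivity. simpl stdv in *.
    unfold Esym in *.
    destruct g; simpl in H1; try tauto. destruct H1 as [[-> HR]|[]].
    destruct p1; simpl in H2, H3, H4; try tauto.
    destruct p2; simpl in H5, H6, H7; try tauto.
    destruct p3; simpl in H8, H9, H10; try tauto.
    destruct H3 as [[-> _]|[]], H6 as [[-> _]|[]], H9 as [[-> _]|[]].
    destruct H2 as [(_ & <- & <- & <- & _)|[]].
    destruct H4 as [[(_ & <-)|[(? & _)|(? & _)]]|[]]; try lia.
    destruct H5 as [(_ & <- & <- & <- & _)|[]].
    destruct H7 as [[(? & _)|[(_ & <-)|(? & _)]]|[]]; try lia.
    destruct H8 as [(_ & <- & <- & <- & _)|[]].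
    destruct H10 as [[(? & _)|[(? & _)|(_ & <-)]]|[]]; try lia.
    exact HR.
  - intros HR. exists (inl (VGad k a b c)), (inl (VPort k a b c 1)), (inl (VPort k a b c 2)),
      (inl (VPort k a b c 3)). unfold stdm. rewrite !Ed_inl.
    replace (stdv (5 + k)) with (VMRel k) by reflexivity. simpl stdv.
    unfold Esym; simpl. repeat split; try (left; repeat split; auto; lia); try (right; left; repeat split; auto; lia).
    all: left; auto.
Qed.

Definition atomA (s : nat -> nat) (a : atom) : Prop :=
  match a with
  | AZero i => s i = 0
  | ARel k i j l => RelS k (s i) (s j) (s l)
  end.

Definition arith_rule (r : rule) : Prop :=
  forall s : nat -> nat, fold_right (fun a acc => atomA s a /\ acc) True (rprem r) -> atomA s (rcon r).

Definition numOf (x : SW) : nat := match x with inl (VNum n) => n | _ => 0 end.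

Lemma atomS_std n a rho : atom_wf n a = true -> (forall i, i < n -> NumS SR stdm (rho i)) ->
  atomS SW SR stdm rho a <-> atomA (fun i => numOf (rho i)) a.
Proof.
  intros Hwf Hn.
  destruct a; simpl in *.
  - apply Nat.ltb_lt in Hwf. rewrite Zero_std.
    destruct (proj1 (Num_std _) (Hn i Hwf)) as [k Hk]. rewrite Hk. simpl. split.
    intros E. injection E. auto. intros ->. reflexivity.
  - repeat rewrite Bool.andb_true_iff in Hwf. destruct Hwf as [[[H1 H2] H3] H4].
    apply Nat.leb_le in H1. apply Nat.ltb_lt in H2. apply Nat.ltb_lt in H3. apply Nat.ltb_lt in H4.
    destruct (proj1 (Num_std _) (Hn i H2)) as [k1 Hk1].
    destruct (proj1 (Num_std _) (Hn j H3)) as [k2 Hk2].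
    destruct (proj1 (Num_std _) (Hn l H4)) as [k3 Hk3].
    rewrite Hk1, Hk2, Hk3. rewrite Rel_std by auto. simpl. reflexivity.
Qed.

Lemma ruleS_std r : rule_wf r = true -> arith_rule r -> ruleS SW SR stdm r.
Proof.
  intros Hwf Ha rho Hn Hp. unfold rule_wf in Hwf. rewrite forallb_forall in Hwf.
  rewrite (atomS_std (rnv r)) by (auto; apply Hwf; simpl; auto).
  apply Ha. rewrite fold_and_forall in *. intros a Hin.
  rewrite <- (atomS_std (rnv r)) by (auto; apply Hwf; simpl; auto). auto.
Qed.

Lemma lcode_nil_inv L : 0 = lcode L -> L = [].
Proof. destruct L; simpl; congruence. Qed.

Lemma lcode_cons_inv a b L : S (cpair a b) = lcode L -> exists L', L = a :: L' /\ b = lcode L'.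
Proof.
  destruct L as [|n L']; simpl; intros H; try discriminate.
  injection H as H. apply cpair_inj in H as [-> ->]. eauto.
Qed.

Lemma pcodes_nil_inv L : 0 = pcodes L -> L = [].
Proof. destruct L; simpl; congruence. Qed.

Lemma pcodes_cons_inv a b L : S (cpair a b) = pcodes L ->
  exists G L', L = G :: L' /\ a = pcode G /\ b = pcodes L'.
Proof.
  destruct L as [|G L']; simpl; intros H; try discriminate.
  injection H as H. apply cpair_inj in H as [-> ->]. eauto.
Qed.

Ltac pinv H := destruct H as [H1 H2]; try discriminate.

Lemma inv0 x F : cpair 0 x = pcode F -> F = pZero.
Proof.
  destruct F; try rewrite pcode_comp; simpl pcode; intros H; apply cpair_inj in H;
  destruct H; try discriminate; auto.
Qed.
Lemma inv1 x F : cpair 1 x = pcode F -> F = pSucc.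
Proof.
  destruct F; try rewrite pcode_comp; simpl pcode; intros H; apply cpair_inj in H;
  destruct H; try discriminate; auto.
Qed.
Lemma inv2 x F : cpair 2 x = pcode F -> F = pProj x.
Proof.
  destruct F; try rewrite pcode_comp; simpl pcode; intros H; apply cpair_inj in H;
  destruct H; try discriminate; subst; auto.
Qed.
Lemma inv3 f gs F : cpair 3 (cpair f gs) = pcode F ->
  exists F1 GL, F = pComp F1 GL /\ f = pcode F1 /\ gs = pcodes GL.
Proof.
  destruct F; try rewrite pcode_comp; simpl pcode; intros H; apply cpair_inj in H;
  destruct H as [H1 H2]; try discriminate.
  apply cpair_inj in H2 as [-> ->]. eauto.
Qed.
Lemma inv4 f g F : cpair 4 (cpair f g) = pcode F ->
  exists F1 G1, F = pRec F1 G1 /\ f = pcode F1 /\ g = pcode G1.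
Proof.
  destruct F; try rewrite pcode_comp; simpl pcode; intros H; apply cpair_inj in H;
  destruct H as [H1 H2]; try discriminate.
  apply cpair_inj in H2 as [-> ->]. eauto.
Qed.
Lemma inv5 f F : cpair 5 f = pcode F -> exists F1, F = pMu F1 /\ f = pcode F1.
Proof.
  destruct F; try rewrite pcode_comp; simpl pcode; intros H; apply cpair_inj in H;
  destruct H as [H1 H2]; try discriminate. subst. eauto.
Qed.

Ltac prep_rule :=
  let s := fresh "s" in
  intros s; simpl;
  repeat match goal with |- context [s ?i] => generalize (s i) end;
  intros;
  repeat match goal with H : _ /\ _ |- _ => destruct H end;
  subst.

Lemma arith_rules : forall r, In r rules -> arith_rule r.
Proof.
  intros r Hr. simpl in Hr.
  repeat (destruct Hr as [<-|Hr]; [prep_rule|]); [..|contradiction].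
  - reflexivity.
  - symmetry; apply cpair_S_r.
  - symmetry; apply cpair_S_0.
  - intros L HL. apply lcode_nil_inv in HL. subst. destruct n; reflexivity.
  - intros L HL. apply lcode_cons_inv in HL as [L' [-> _]]. reflexivity.
  - intros L HL. apply lcode_cons_inv in HL as [L' [-> HL']]. simpl. auto.
  - intros F L HF HL. apply inv0 in HF. subst. constructor.
  - intros F L HF HL. apply inv1 in HF. subst. rewrite (H2 L) by auto. rewrite <- hd_nth. constructor.
  - intros F L HF HL. apply inv2 in HF. subst. rewrite (H3 L) by auto. constructor.
  - intros F L HF HL. apply inv3 in HF as (F1 & GL & -> & -> & ->).
    match goal with H : EvsStd _ _ _ |- _ => destruct (H GL L eq_refl HL) as (WL & -> & HW) end.
    match goal with H : EvStd _ _ _ |- _ => econstructor; [exact HW| apply (H F1 WL eq_refl eq_refl)] end.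
  - intros F L HF HL. apply inv4 in HF as (F1 & G1 & -> & -> & ->).
    apply lcode_cons_inv in HL as (L' & -> & HL'). constructor.
    match goal with H : EvStd _ _ _ |- _ => apply (H F1 L' eq_refl HL') end.
  - intros F L HF HL. apply inv4 in HF as (F1 & G1 & -> & -> & ->).
    apply lcode_cons_inv in HL as (L' & -> & HL').
    match goal with H : EvStd (cpair 4 _) (S (cpair ?n _)) ?y |- _ =>
      apply (evRecS F1 G1 n L' y); [apply (H (pRec F1 G1) (n :: L') eq_refl); simpl; congruence|] end.
    match goal with H : EvStd (pcode G1) (S (cpair ?n (S (cpair ?y _)))) _ |- _ =>
      apply (H G1 (n :: y :: L') eq_refl); simpl; congruence end.
  - intros F L HF HL. apply inv5 in HF as (F1 & -> & ->). subst.
    constructor.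
    + match goal with H : EvStd _ _ 0 |- _ => apply (H F1 _ eq_refl); reflexivity end.
    + match goal with H : MuStd _ _ _ |- _ => apply (H F1 L eq_refl eq_refl) end.
  - intros GL L HG HL. apply pcodes_nil_inv in HG; subst. exists []. split; auto. constructor.
  - intros GL L HG HL. apply pcodes_cons_inv in HG as (G & GL' & -> & -> & ->).
    match goal with H : EvsStd _ _ _ |- _ => destruct (H GL' L eq_refl HL) as (WL & -> & HW) end.
    match goal with H : EvStd _ _ ?y |- _ => exists (y :: WL); split; [reflexivity|];
      constructor; [apply (H G L eq_refl HL)|exact HW] end.
  - intros F L _ _ k Hk. lia.
  - intros F L HF HL k Hk.
    match goal with H : EvStd _ (S (cpair ?n _)) (S ?r) |- _ =>
      destruct (Nat.eq_dec k n) as [->|Hne];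
      [exists r; apply (H F (n :: L) HF); simpl; congruence|] end.
    match goal with H : MuStd _ _ _ |- _ => apply (H F L HF HL); lia end.
Qed.

Lemma std_Ax : AxS SW SR stdm.
Proof.
  split; [|split].
  - exists (inl (VNum 0)). rewrite Num_std, Zero_std. eauto.
  - intros x Hx. apply Num_std in Hx as [n ->]. exists (inl (VNum (S n))).
    rewrite Num_std, Rel_std by lia. simpl. eauto.
  - intros r Hr. apply ruleS_std. apply rules_wf; auto. apply arith_rules; auto.
Qed.

Lemma std_name x a : NameS SW SR stdm x a -> NumS SR stdm a -> a = inl (VNum x).
Proof.
  revert a; induction x; intros a H Ha; simpl in H.
  - apply Zero_std, H.
  - destruct H as [b [[Hb Hs] Hn]]. pose proof (IHx b Hn Hb) as ->.
    apply Num_std in Ha as [k ->]. rewrite Rel_std in Hs by lia. simpl in Hs.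
    destruct Hs as [-> _]. reflexivity.
Qed.

Lemma std_goal P : GoalS SW SR stdm (pcode P) -> peval P [pcode P] 0.
Proof.
  intros [a [Hn (z & p & v & Ha & Hz & Hz' & Hp & Hpr & Hv & Hs & He)]].
  pose proof (std_name _ _ Hn Ha) as ->.
  apply Zero_std in Hz' as ->. apply Num_std in Hp as [np ->]. apply Num_std in Hv as [nv ->].
  rewrite Rel_std in Hpr, Hs, He by lia. simpl in Hpr, Hs, He.
  destruct Hs as [-> _]. subst np.
  apply (He P [pcode P] eq_refl). reflexivity.
Qed.

Section Transfer.
Variables (A W : Type) (RA : A -> A -> Prop) (RW : W -> W -> Prop) (f : A -> W)
  (V : nat -> W -> Prop).

Fixpoint Wit (p : mform) : Prop :=
  match p with
  | mVar _ | mBot => True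
  | mNeg a => Wit a
  | mOr a b => Wit a /\ Wit b
  | mBox a => Wit a /\ forall x, ~ msat RW V (f x) (mBox a) -> exists y, RA x y /\ ~ msat RW V (f y) a
  end.

Lemma transfer : (forall x y, RA x y -> RW (f x) (f y)) -> forall p, Wit p ->
  forall x, msat RA (fun q z => V q (f z)) x p <-> msat RW V (f x) p.
Proof.
  intros Hf p; induction p; simpl; intros Hw x.
  - reflexivity.
  - reflexivity.
  - rewrite IHp; auto. reflexivity.
  - destruct Hw. rewrite IHp1, IHp2; auto. reflexivity.
  - destruct Hw as [Hw1 Hw2]. split.
    + intros H. apply NNPP. intros H'. destruct (Hw2 x H') as [y [Hy Hn]].
      apply Hn. apply IHp; auto.
    + intros H y Hy. apply IHp; auto.
Qed.
End Transfer.

Section StdValid.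
Variable L : mform -> Prop.
Hypothesis Hfl : forall n : Z, (-1 <= n)%Z -> S_L L 2 n.
Variable V : nat -> SW -> Prop.

Fixpoint wl (p : mform) : list vtx :=
  match p with
  | mVar _ | mBot => []
  | mNeg a => wl a
  | mOr a b => wl a ++ wl b
  | mBox a =>
      match excluded_middle_informative (exists u, ~ msat SR V (inl u) a) with
      | left H => [proj1_sig (constructive_indefinite_description _ H)]
      | right _ => []
      end ++ wl a
  end.

Definition rdef : {p : vtx * vtx | adj (fst p) (snd p)} := exist _ (VNum 0, VMNum) I.

Lemma std_valid_at (p : mform) (w : SW) : L p -> msat SR V w p.
Proof.
  intros Hp.
  set (r0 := match w with inr r => r | inl _ => rdef end).
  set (ext := (match w with inl u => [u] | inr _ => [] end) ++ wl p).
  set (K := fst (proj1_sig r0) :: snd (proj1_sig r0) :: ext).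
  set (n := length ext).
  destruct (Hfl (Z.of_nat n) ltac:(lia)) as (_ & _ & Hv).
  specialize (Hv p Hp). rename Hv into Hval.
  set (FW := flower_W 2 (Z.of_nat n)).
  set (f := fun x : FW => match proj1_sig x with 0 => inr r0 | S i => inl (nth i K VMNum) end : SW).
  assert (mk : forall i, i <= 2 + n -> { x : FW | proj1_sig x = i }).
  { intros i Hi. unshelve eexists (exist _ i _). split. lia. rewrite Nat2Z.id. exact Hi. reflexivity. }
  assert (Hb : forall x : FW, proj1_sig x <= 2 + n).
  { intros [x Hx]. simpl. destruct Hx as [_ Hx]. rewrite Nat2Z.id in Hx. exact Hx. }
  assert (HK : length K = 2 + n) by reflexivity.
  assert (Hforth : forall x y, flower_R 2 (Z.of_nat n) x y -> SR (f x) (f y)).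
  { intros [x Hx] [y Hy]. unfold flower_R, f. simpl. rewrite Nat2Z.id.
    intros [[-> Hy2]|[Hx2 Hy2]].
    - destruct y as [|[|[|y]]]; try lia; simpl; auto.
    - destruct x as [|x]; [lia|]. destruct y as [|y]; [lia|]. simpl. auto. }
  assert (HW : forall q, incl (wl q) K -> Wit FW SW (flower_R 2 (Z.of_nat n)) SR f V q).
  { induction q; simpl; intros Hi; auto.
    - split; [apply IHq1|apply IHq2]; intros u Hu; apply Hi; apply in_or_app; auto.
    - split.
      + apply IHq. intros u Hu. apply Hi. apply in_or_app. auto.
      + intros x Hx.
        assert (Hex : exists v, SR (f x) v /\ ~ msat SR V v q).
        { apply NNPP. intros H. apply Hx. intros v Hv. apply NNPP. intros H'. apply H. eauto. }
        destruct Hex as [v [Hv Hn]].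
        destruct (proj1_sig x) as [|i] eqn:Ex.
        * unfold f in Hv. rewrite Ex in Hv. destruct v as [v|v]; [|contradiction].
          simpl in Hv. destruct Hv as [->| ->].
          -- destruct (mk 1 ltac:(lia)) as [y Ey]. exists y. split.
             unfold flower_R. rewrite Ex, Ey. lia.
             unfold f. rewrite Ey. exact Hn.
          -- destruct (mk 2 ltac:(lia)) as [y Ey]. exists y. split.
             unfold flower_R. rewrite Ex, Ey. lia.
             unfold f. rewrite Ey. exact Hn.
        * destruct v as [u|v].
          2: { unfold f in Hv. rewrite Ex in Hv. contradiction. }
          destruct (excluded_middle_informative (exists u, ~ msat SR V (inl u) q)) as [E|E].
          2: { exfalso. apply E. eauto. }
          destruct (constructive_indefinite_description _ E) as [u' Hu'] eqn:Eu.
          assert (Hin : In u' K).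
          { apply Hi. apply in_or_app. left. simpl. auto. }
          apply In_nth with (d := VMNum) in Hin as [j [Hj Hjn]].
          destruct (mk (S j) ltac:(lia)) as [y Ey]. exists y. split.
          -- unfold flower_R. rewrite Ex, Ey. pose proof (Hb x). rewrite Ex in H. rewrite Nat2Z.id. lia.
          -- unfold f. rewrite Ey. rewrite Hjn. exact Hu'. }
  assert (Hwit : Wit FW SW (flower_R 2 (Z.of_nat n)) SR f V p).
  { apply HW. intros u Hu. unfold K. right. right. unfold ext. apply in_or_app. auto. }
  pose proof (transfer _ _ _ _ f V Hforth p Hwit) as T.
  destruct w as [u|r].
  - destruct (mk 3 ltac:(unfold n, ext; simpl; lia)) as [x Ex].
    assert (f x = inl u) by (unfold f; rewrite Ex; reflexivity).
    rewrite <- H, <- T. apply Hval.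
  - destruct (mk 0 ltac:(lia)) as [x Ex].
    assert (f x = inr r) by (unfold f; rewrite Ex; reflexivity).
    rewrite <- H, <- T. apply Hval.
Qed.

End StdValid.

Lemma th_iff L (Hfl : forall n : Z, (-1 <= n)%Z -> S_L L 2 n) P :
  Th_Fr L (sigmaF (pcode P)) <-> peval P [pcode P] 0.
Proof.
  split.
  - intros [_ H]. specialize (H SW SR (inhabits (inl (VNum 0)))).
    assert (Hv : validates SR L).
    { intros f Hf V w. exact (std_valid_at L Hfl V f w Hf). }
    specialize (H Hv stdm). rewrite sigma_sem in H.
    apply std_goal. apply H. auto. apply std_Ax.
  - intros H. split. apply sigma_sentence.
    intros W R _ _ e. rewrite sigma_sem. intros e' _ HAx. apply goal_fact; auto.
Qed.

Definition cEx (i : nat) (c : fctx) : fctx := CImpL (CAll i (CImpL c fBot)) fBot.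
Definition cAndR (a : fform) (c : fctx) : fctx := CImpL (CImpR a (CImpL c fBot)) fBot.
Definition cAndL (c : fctx) (b : fform) : fctx := CImpL (CImpL c (fNot b)) fBot.

Definition Kc : fctx :=
  cEx 17 (cAndR (fAnd (fNum 17) (fSucc 17 16)) (CAll 16 (CImpR (fEq 16 17) CHole))).
Definition Csig : fctx :=
  fold_right CAll (CImpR AxF (cEx 16 (cAndL CHole RestF))) (seq 0 11).

Lemma Kc_fill x : fill Kc (NF x) = NF (S x).
Proof. reflexivity. Qed.
Lemma Csig_fill x : fill Csig (NF x) = sigmaF x.
Proof. reflexivity. Qed.

Definition Fprog : prf :=
  pComp (ctxprog Csig) [pRec (fprog (NF 0)) (pComp (ctxprog Kc) [pProj 1])].

Lemma Fprog_ok x : peval Fprog [x] (fcode (sigmaF x)).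
Proof.
  assert (H : forall x, peval (pRec (fprog (NF 0)) (pComp (ctxprog Kc) [pProj 1])) [x] (fcode (NF x))).
  { induction x0.
    - apply evRec0. apply fprog_ok.
    - eapply evRecS. exact IHx0. econstructor.
      + econstructor. apply (evProj 1 [x0; fcode (NF x0)]). constructor.
      + simpl nth. rewrite <- Kc_fill. apply (ctxprog_ok Kc (NF x0) []). }
  econstructor. econstructor. apply H. constructor.
  rewrite <- Csig_fill. apply (ctxprog_ok Csig (NF x) []).
Qed.

Theorem lemma49 (L : mform -> Prop) :
  euclidean_modal_logic L ->
  (forall n : Z, (-1 <= n)%Z -> S_L L 2 n) ->
  ~ decidable_sentences (Th_Fr L).
Proof.
  intros _ Hfl [d Hd].
  set (D := pComp d [Fprog]).
  set (c := pcode D).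
  assert (HD : forall y, peval d [fcode (sigmaF c)] y -> peval D [c] y).
  { intros y Hy. econstructor. econstructor. apply Fprog_ok. constructor. exact Hy. }
  destruct (Hd (sigmaF c) (sigma_sentence c)) as [H1 H0].
  destruct (classic (Th_Fr L (sigmaF c))) as [Ht|Ht].
  - pose proof (HD 1 (H1 Ht)) as E1.
    pose proof (proj1 (th_iff L Hfl D) Ht) as E0.
    pose proof (peval_det _ _ _ E1 _ E0). discriminate.
  - apply Ht. apply (th_iff L Hfl D). apply HD. apply H0. exact Ht.
Qed.
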